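(* Let $R$ be a von Neumann regular semiartinian ring with primitive factors artinian, with socle sequence $(S_\alpha\mid\alpha\le\sigma+1)$ and dimension sequence $\{(\lambda_\alpha,\{(n_{\alpha\beta},K_{\alpha\beta})\mid\beta<\lambda_\alpha\})\mid\alpha\le\sigma\}$. Then for each $\alpha\le\sigma$ the following are equivalent: (i) $R/S_\alpha$ is commutative; (ii) for each $\beta<\lambda_\alpha$, $K_{\alpha\beta}$ is commutative and $n_{\alpha\beta}=1$; (iii) for each $\beta<\lambda_\alpha$, $K_{\alpha\beta}$ is commutative, and $R/S_\alpha$ is isomorphic to a subring $\bar R_\alpha$ of the ring direct product $\prod_{\beta<\lambda_\alpha}K_{\alpha\beta}$ such that $\mathrm{Soc}(\bar R_\alpha)=\bigoplus_{\beta<\lambda_\alpha}K_{\alpha\beta}$.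
   Context: Socle sequence of $R$: $S_0=0$, $S_{\alpha+1}/S_\alpha=\mathrm{Soc}(R/S_\alpha)$, unions at limit ordinals; $R$ semiartinian means $S_{\sigma+1}=R$ for some $\sigma$ (Loewy length $\sigma+1$). $R$ has primitive factors artinian if $R/P$ is artinian for every primitive ideal $P$. For such $R$ (regular, semiartinian, primitive factors artinian) it is known that for each $\alpha\le\sigma$ the layer $L_\alpha=S_{\alpha+1}/S_\alpha$ is isomorphic, as a ring without unit, to $\bigoplus_{\beta<\lambda_\alpha}M_{n_{\alpha\beta}}(K_{\alpha\beta})$, where $\lambda_\alpha>0$ is the number of homogeneous components of $L_\alpha$ (infinite for $\alpha<\sigma$, finite for $\alpha=\sigma$), each $n_{\alpha\beta}$ is a positive integer, and each $K_{\alpha\beta}$ is a skew-field; the summand $M_{n_{\alpha\beta}}(K_{\alpha\beta})$ corresponds to the $\beta$-th homogeneous component $H_{\alpha\beta}\cong P_{\alpha\beta}^{n_{\alpha\beta}}$ of $L_\alpha$ with $P_{\alpha\beta}$ a simple projective $R/S_\alpha$-module and $K_{\alpha\beta}\cong\mathrm{End}(P_{\alpha\beta})$. The family $\{(\lambda_\alpha,\{(n_{\alpha\beta},K_{\alpha\beta})\mid\beta<\lambda_\alpha\})\mid\alpha\le\sigma\}$ is the dimension sequence of $R$. *)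

(* Defs.v *)
From Stdlib Require List.
From HB Require Import structures.
From mathcomp Require Import all_boot all_algebra.
Set Implicit Arguments. Unset Strict Implicit. Unset Printing Implicit Defensive.
Import GRing.Theory.
Local Open Scope ring_scope.

Section Defs.
Variable R : nzRingType.

Definition subR (A B : R -> Prop) := forall x, A x -> B x.
Definition eqR (A B : R -> Prop) := forall x, A x <-> B x.

Definition right_ideal (A : R -> Prop) :=
  [/\ A 0, (forall x y, A x -> A y -> A (x - y)) & (forall x r, A x -> A (x * r))].

Definition vN_regular := forall a : R, exists x, a * x * a = a.

(* M/I is a simple (right) submodule of R/I, i.e. a minimal right ideal of R/I
   (right ideals of R/I <-> right ideals of R containing I) *)
Definition minimal_over (I M : R -> Prop) :=
  [/\ right_ideal M, subR I M, (exists m, M m /\ ~ I m) &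
      forall N, right_ideal N -> subR I N -> subR N M ->
        (exists n, N n /\ ~ I n) -> subR M N].

(* f induces a right R-module homomorphism A/I -> B/I *)
Definition hom_over (I A B : R -> Prop) (f : R -> R) :=
  [/\ (forall x, A x -> B (f x)),
      (forall x, A x -> I x -> I (f x)),
      (forall x y, A x -> A y -> I (f (x + y) - (f x + f y))) &
      (forall x r, A x -> I (f (x * r) - f x * r))].

(* A/I and B/I are isomorphic right R-modules *)
Definition iso_over (I A B : R -> Prop) :=
  exists f, [/\ hom_over I A B f,
               (forall x, A x -> I (f x) -> I x) &
               (forall y, B y -> exists x, A x /\ I (f x - y))].

(* End(M/I) is commutative *)
Definition endo_comm (I M : R -> Prop) :=
  forall f g, hom_over I M M f -> hom_over I M M g ->
    forall x, M x -> I (f (g x) - g (f x)).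

(* Soc(R/I) (pulled back to R): sums of elements of minimal right ideals of R/I *)
Definition soc_over (I : R -> Prop) (x : R) :=
  exists s : seq R, (forall y, y \in s -> exists N, minimal_over I N /\ N y)
                    /\ I (x - \sum_(y <- s) y).

(* homogeneous component of Soc(R/I) determined by the simple module M/I *)
Definition hom_comp (I M : R -> Prop) (x : R) :=
  exists s : seq R, (forall y, y \in s -> exists N, [/\ minimal_over I N, iso_over I N M & N y])
                    /\ I (x - \sum_(y <- s) y).

(* the terms S_alpha of the socle sequence: S_0 = 0, S_{a+1} = preimage of Soc(R/S_a),
   unions at limits (= unions of nonempty families of earlier terms) *)
Inductive socle_term : (R -> Prop) -> Prop :=
  | st0 : socle_term (fun x => x = 0)
  | stS I : socle_term I -> socle_term (soc_over I)
  | stU (C : (R -> Prop) -> Prop) :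
      (exists I, C I) -> (forall I, C I -> socle_term I) ->
      socle_term (fun x => exists I, C I /\ I x).

Definition semiartinian := exists I, socle_term I /\ forall x, I x.

Definition maximal_right_ideal (M : R -> Prop) :=
  [/\ right_ideal M, ~ M 1 &
      forall N, right_ideal N -> subR M N -> ~ N 1 -> subR N M].

(* (right) primitive ideal = annihilator of a simple right module R/M *)
Definition primitive_ideal (P : R -> Prop) :=
  exists M, maximal_right_ideal M /\ eqR P (fun r => forall s, M (s * r)).

(* R/P is (right) artinian: DCC on right ideals of R containing P *)
Definition artinian_over (P : R -> Prop) :=
  forall f : nat -> R -> Prop,
    (forall n, right_ideal (f n) /\ subR P (f n)) ->
    (forall n, subR (f n.+1) (f n)) ->
    exists m, forall n, (m <= n)%N -> subR (f m) (f n).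

Definition prim_factors_artinian :=
  forall P, primitive_ideal P -> artinian_over P.

Definition quot_comm (I : R -> Prop) := forall x y, I (x * y - y * x).

(* (ii) for each homogeneous component H ~ P^n of Soc(R/I): End(P) commutative and n = 1,
   i.e. H is isomorphic to P^1 = P *)
Definition cond_ii (I : R -> Prop) :=
  forall M, minimal_over I M -> endo_comm I M /\ iso_over I (hom_comp I M) M.

(* c indexes the homogeneous components: each c b is a simple submodule of R/I,
   and every simple submodule is isomorphic to c b for exactly one b *)
Definition components_index (Idx : Type) (I : R -> Prop) (c : Idx -> R -> Prop) :=
  [/\ (forall b, minimal_over I (c b)),
      (forall N, minimal_over I N -> exists b, iso_over I N (c b)) &
      (forall b b', iso_over I (c b) (c b') -> b = b')].

(* psi : K -> End(M/I) is a ring isomorphism (product in End = composition) *)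
Definition endo_ring_hom (K : nzRingType) (I M : R -> Prop) (psi : K -> R -> R) :=
  [/\ (forall a, hom_over I M M (psi a)),
      (forall a b x, M x -> I (psi (a + b) x - (psi a x + psi b x))),
      (forall a b x, M x -> I (psi (a * b) x - psi a (psi b x))) &
      (forall x, M x -> I (psi 1 x - x))].

Definition endo_ring_iso (K : nzRingType) (I M : R -> Prop) (psi : K -> R -> R) :=
  [/\ endo_ring_hom I M psi,
      (forall a b, (forall x, M x -> I (psi a x - psi b x)) -> a = b) &
      (forall f, hom_over I M M f -> exists a, forall x, M x -> I (psi a x - f x))].

Section Prod.
Variables (Idx : Type) (K : Idx -> nzRingType).
Notation PT := (forall b, K b).

Definition pzero : PT := fun b => 0.
Definition psub (z w : PT) : PT := fun b => z b - w b.
Definition pmul (z w : PT) : PT := fun b => z b * w b.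
Definition psum (s : seq PT) : PT := fun b => \sum_(u <- s) u b.

Definition prod_right_ideal (Rb N : PT -> Prop) :=
  [/\ (forall z, N z -> Rb z), N pzero,
      (forall z w, N z -> N w -> N (psub z w)) &
      (forall z r, N z -> Rb r -> N (pmul z r))].

Definition prod_nonzero (N : PT -> Prop) := exists z, N z /\ exists b, z b <> 0.

Definition prod_minimal (Rb N : PT -> Prop) :=
  [/\ prod_right_ideal Rb N, prod_nonzero N &
      forall N', prod_right_ideal Rb N' -> (forall z, N' z -> N z) ->
        prod_nonzero N' -> forall z, N z -> N' z].

Definition prod_soc (Rb : PT -> Prop) (z : PT) :=
  exists s : seq PT, (forall u, List.In u s -> exists N, prod_minimal Rb N /\ N u)
                     /\ forall b, z b = psum s b.

(* elements of the direct sum (+)_b K b *)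
Definition fin_supp (z : PT) := exists t : list Idx, forall b, ~ List.In b t -> z b = 0.
End Prod.

Definition cond_iii (I : R -> Prop) :=
  exists (Idx : Type) (K : Idx -> nzRingType) (c : Idx -> R -> Prop)
         (psi : forall b, K b -> R -> R) (phi : forall b, {rmorphism R -> K b}),
    let Rbar := fun z : (forall b, K b) => exists x, forall b, z b = phi b x in
    [/\ components_index I c,
        (forall b, endo_ring_iso I (c b) (psi b)),
        (forall b (u v : K b), u * v = v * u),
        (forall x, I x <-> forall b, phi b x = 0) &
        (forall z, prod_soc Rbar z <-> fin_supp z)].

End Defs.

(* Main.v *)
Require Import Defs.
From HB Require Import structures.
From mathcomp Require Import all_boot all_algebra.
From Stdlib Require Import Classical ClassicalEpsilon FunctionalExtensionality PropExtensionality ProofIrrelevance.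
Set Implicit Arguments. Unset Strict Implicit. Unset Printing Implicit Defensive.
Import GRing.Theory.
Local Open Scope ring_scope.


Lemma predext (T : Type) (A B : T -> Prop) : (forall x, A x <-> B x) -> A = B.
Proof. move=> H; apply: functional_extensionality => x; apply: propositional_extensionality; exact: H. Qed.

Section Cong.
Variable R : nzRingType.
Implicit Types (J M N : R -> Prop) (x y z r : R).

Lemma ri0 J : right_ideal J -> J 0. Proof. by case. Qed.
Lemma riB J x y : right_ideal J -> J x -> J y -> J (x - y). Proof. by case=> _ H _; apply: H. Qed.
Lemma riMr J x r : right_ideal J -> J x -> J (x * r). Proof. by case=> _ _ H; apply: H. Qed.
Lemma riN J x : right_ideal J -> J x -> J (- x).
Proof. move=> HJ Hx; rewrite -sub0r; apply: riB => //; exact: ri0. Qed.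
Lemma riD J x y : right_ideal J -> J x -> J y -> J (x + y).
Proof. move=> HJ Hx Hy; rewrite -[y]opprK; apply: riB => //; exact: riN. Qed.
Lemma riS J (s : seq R) : right_ideal J -> (forall y, y \in s -> J y) -> J (\sum_(y <- s) y).
Proof.
move=> HJ; elim: s => [|a s IH] H; first by rewrite big_nil; exact: ri0.
rewrite big_cons; apply: riD => //; first by apply: H; exact: mem_head.
by apply: IH => y Hy; apply: H; rewrite in_cons Hy orbT.
Qed.

Definition eqm J x y := J (x - y).

Lemma eqm_refl J x : right_ideal J -> eqm J x x.
Proof. move=> HJ; rewrite /eqm subrr; exact: ri0. Qed.
Lemma eqm_eq J x y : right_ideal J -> x = y -> eqm J x y.
Proof. by move=> HJ ->; apply: eqm_refl. Qed.
Lemma eqm_tr J x y z : right_ideal J -> eqm J x y -> eqm J y z -> eqm J x z.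
Proof. rewrite /eqm => HJ H1 H2; have := riD HJ H1 H2; by rewrite subrKA. Qed.
Lemma eqm_sym J x y : right_ideal J -> eqm J x y -> eqm J y x.
Proof. rewrite /eqm => HJ H; have := riN HJ H; by rewrite opprB. Qed.
Lemma eqmD J x x' y y' : right_ideal J -> eqm J x x' -> eqm J y y' -> eqm J (x + y) (x' + y').
Proof. rewrite /eqm => HJ H1 H2; have := riD HJ H1 H2; by rewrite opprD addrACA. Qed.
Lemma eqmN J x x' : right_ideal J -> eqm J x x' -> eqm J (- x) (- x').
Proof. rewrite /eqm => HJ H; have := riN HJ H; by rewrite opprB opprK addrC. Qed.
Lemma eqmB J x x' y y' : right_ideal J -> eqm J x x' -> eqm J y y' -> eqm J (x - y) (x' - y').
Proof. move=> HJ H1 H2; apply: eqmD => //; exact: eqmN. Qed.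
Lemma eqmMr J x x' r : right_ideal J -> eqm J x x' -> eqm J (x * r) (x' * r).
Proof. rewrite /eqm => HJ H; have := riMr r HJ H; by rewrite mulrBl. Qed.
Lemma eqm0 J x : right_ideal J -> J x <-> eqm J x 0.
Proof. by rewrite /eqm subr0. Qed.
Lemma eqm_in J M x y : right_ideal M -> subR J M -> eqm J x y -> M y -> M x.
Proof. move=> HM JM H My; have := riD HM (JM _ H) My; by rewrite subrK. Qed.
Lemma eqm_inJ J x y : right_ideal J -> eqm J x y -> J y -> J x.
Proof. move=> HJ; apply: eqm_in => //. Qed.

Definition lclosed J := forall x r, J x -> J (r * x).
Definition ideal2 J := right_ideal J /\ lclosed J.
Lemma eqmMl J x x' r : ideal2 J -> eqm J x x' -> eqm J (r * x) (r * x').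
Proof. rewrite /eqm => -[HJ HL] H; have := HL _ r H; by rewrite mulrBr. Qed.
Lemma eqmM J x x' y y' : ideal2 J -> eqm J x x' -> eqm J y y' -> eqm J (x * y) (x' * y').
Proof.
move=> HJ H1 H2; apply: eqm_tr (HJ.1) (eqmMr _ HJ.1 H1) _; exact: eqmMl.
Qed.
End Cong.


Section Hom.
Variable R : nzRingType.
Implicit Types (J A B M N : R -> Prop) (x y z r : R).

Lemma hom_B J A B f a b : right_ideal J -> right_ideal A -> hom_over J A B f -> A a -> A b ->
  eqm J (f (a - b)) (f a - f b).
Proof.
move=> HJ HA [_ _ Hadd _] Ha Hb.
have Hab : A (a - b) by apply: riB.
have := Hadd _ _ Hab Hb; rewrite subrK => H.
apply: eqm_sym => //; apply: (eqm_tr HJ (eqmB HJ H (eqm_refl _ HJ))).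
apply: eqm_eq => //; by rewrite addrK.
Qed.

Lemma hom_eqm J A B f a b : right_ideal J -> right_ideal A -> hom_over J A B f -> A a -> A b ->
  eqm J a b -> eqm J (f a) (f b).
Proof.
move=> HJ HA Hf Ha Hb Hab.
apply: (eqm_inJ HJ (eqm_sym HJ (hom_B HJ HA Hf Ha Hb))).
case: Hf => _ H0 _ _; apply: H0 => //; exact: riB.
Qed.

Lemma hom_Mr J A B f a r : hom_over J A B f -> A a -> eqm J (f (a * r)) (f a * r).
Proof. by case=> _ _ _ H Ha; apply: H. Qed.

Lemma iso_sym J A B : right_ideal J -> right_ideal A -> right_ideal B ->
  iso_over J A B -> iso_over J B A.
Proof.
move=> HJ HA HB [f [Hf Hinj Hsur]].
pose g y := epsilon (inhabits 0) (fun x => A x /\ eqm J (f x) y).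
have gP : forall y, B y -> A (g y) /\ eqm J (f (g y)) y.
  move=> y By; apply: (epsilon_spec (inhabits 0) (fun x => A x /\ eqm J (f x) y)).
  have [x [Ax Hx]] := Hsur y By; by exists x.
have finj : forall a b, A a -> A b -> eqm J (f a) (f b) -> eqm J a b.
  move=> a b Ha Hb H; apply: Hinj; first exact: riB.
  apply: (eqm_inJ HJ (hom_B HJ HA Hf Ha Hb)); exact: H.
case: (Hf) => HfB Hf0 Hfadd Hfr.
exists g; split; first split.
- by move=> y By; case: (gP y By).
- move=> y By Jy; case: (gP y By) => Ag Hg; apply: Hinj => //.
  exact: eqm_inJ HJ Hg Jy.
- move=> x y Bx By; have Bxy : B (x + y) by apply: riD.
  case: (gP _ Bxy) => A1 H1; case: (gP _ Bx) => A2 H2; case: (gP _ By) => A3 H3.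
  change (eqm J (g (x + y)) (g x + g y)); apply: finj => //; first exact: riD.
  apply: (eqm_tr HJ H1); apply: eqm_sym => //; apply: (eqm_tr HJ (Hfadd _ _ A2 A3)).
  exact: eqmD.
- move=> x r Bx; have Bxr : B (x * r) by apply: riMr.
  case: (gP _ Bxr) => A1 H1; case: (gP _ Bx) => A2 H2.
  change (eqm J (g (x * r)) (g x * r)); apply: finj => //; first exact: riMr.
  apply: (eqm_tr HJ H1); apply: eqm_sym => //; apply: (eqm_tr HJ (hom_Mr r Hf A2)).
  exact: eqmMr.
- move=> y By Jg; case: (gP y By) => Ag Hg.
  apply: (eqm_inJ HJ (eqm_sym HJ Hg)); exact: Hf0.
- move=> x Ax; exists (f x); split; first exact: HfB.
  have Bfx := HfB x Ax; case: (gP _ Bfx) => Ag Hg; exact: finj.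
Qed.

Lemma iso_id J M : right_ideal J -> iso_over J M M.
Proof.
move=> HJ; exists id; split.
- split => //.
  + by move=> x y _ _; rewrite subrr; exact: ri0.
  + by move=> x r _; rewrite subrr; exact: ri0.
- by [].
- by move=> y My; exists y; split => //; rewrite subrr; exact: ri0.
Qed.

Definition spanQ J (Q : R -> Prop) x :=
  exists s : seq R, (forall y, y \in s -> Q y) /\ J (x - \sum_(y <- s) y).

Lemma span_in J Q x : J x -> spanQ J Q x.
Proof. by move=> Jx; exists [::]; split => //; rewrite big_nil subr0. Qed.
Lemma span_Q J Q x : right_ideal J -> Q x -> spanQ J Q x.
Proof.
move=> HJ Qx; exists [:: x]; split; first by move=> y; rewrite inE => /eqP ->.
by rewrite big_seq1 subrr; exact: ri0.
Qed.
Lemma span_sub J Q x y : right_ideal J -> (forall y, Q y -> Q (- y)) ->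
  spanQ J Q x -> spanQ J Q y -> spanQ J Q (x - y).
Proof.
move=> HJ HQ [s [Hs Hx]] [t [Ht Hy]]; exists (s ++ map -%R t); split.
  move=> u; rewrite mem_cat => /orP [|/mapP [v Hv ->]]; first exact: Hs.
  exact/HQ/Ht.
rewrite big_cat big_map /= sumrN; exact: eqmB.
Qed.
Lemma span_mulr J Q x r : right_ideal J -> (forall y, Q y -> Q (y * r)) ->
  spanQ J Q x -> spanQ J Q (x * r).
Proof.
move=> HJ HQ [s [Hs Hx]]; exists (map (fun y => y * r) s); split.
  by move=> u /mapP [v Hv ->]; apply/HQ/Hs.
rewrite big_map -mulr_suml; exact: eqmMr.
Qed.
Lemma span_mull J Q x r : ideal2 J -> (forall y, Q y -> Q (r * y)) ->
  spanQ J Q x -> spanQ J Q (r * x).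
Proof.
move=> HJ HQ [s [Hs Hx]]; exists (map (fun y => r * y) s); split.
  by move=> u /mapP [v Hv ->]; apply/HQ/Hs.
rewrite big_map -mulr_sumr; exact: eqmMl.
Qed.
Lemma span_ri J Q : right_ideal J -> (forall y, Q y -> Q (- y)) -> (forall y r, Q y -> Q (y * r)) ->
  right_ideal (spanQ J Q).
Proof.
move=> HJ H1 H2; split; first exact: span_in (ri0 HJ).
- by move=> x y; apply: span_sub.
- by move=> x r; apply: span_mulr => // y; apply: H2.
Qed.

Lemma soc_span J : soc_over J = spanQ J (fun y => exists N, minimal_over J N /\ N y).
Proof. by []. Qed.
Lemma homc_span J M : hom_comp J M =
  spanQ J (fun y => exists N, [/\ minimal_over J N, iso_over J N M & N y]).
Proof. by []. Qed.

Definition lmap J N r := fun v => exists u, N u /\ eqm J v (r * u).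

Lemma lmap_ri J N r : right_ideal J -> right_ideal N -> right_ideal (lmap J N r).
Proof.
move=> HJ HN; split.
- exists 0; split; [exact: ri0 | by rewrite mulr0; apply: eqm_refl].
- move=> x y [u [Nu Hu]] [v [Nv Hv]]; exists (u - v); split; first exact: riB.
  rewrite mulrBr; exact: eqmB.
- move=> x s [u [Nu Hu]]; exists (u * s); split; first exact: riMr.
  rewrite mulrA; exact: eqmMr.
Qed.

Lemma lmap_J J N r : right_ideal J -> right_ideal N -> subR J (lmap J N r).
Proof. move=> HJ HN v Jv; exists 0; split; [exact: ri0 | by rewrite /eqm mulr0 subr0]. Qed.

Lemma lmap_min J N r : ideal2 J -> minimal_over J N -> (exists v, lmap J N r v /\ ~ J v) ->
  minimal_over J (lmap J N r).
Proof.
move=> [HJ HL] [HN JN [m [Nm nJm]] Hmin] Hnz.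
split => //; [exact: lmap_ri | exact: lmap_J |].
move=> N' HN' JN' N'l [n' [N'n' nJn']].
pose Ps := fun u => N u /\ N' (r * u).
have HPs : right_ideal Ps.
  split.
  - split; [exact: ri0 | rewrite mulr0; exact: ri0].
  - move=> x y [Nx Hx] [Ny Hy]; split; [exact: riB | rewrite mulrBr; exact: riB].
  - move=> x s [Nx Hx]; split; [exact: riMr | rewrite mulrA; exact: riMr].
have JPs : subR J Ps by move=> u Ju; split; [exact: JN | apply: JN'; exact: HL].
have PsN : subR Ps N by move=> u [].
case: (N'l _ N'n') => u [Nu Hu].
have NPs := Hmin Ps HPs JPs PsN.
have Pu : Ps u.
  split => //; apply: eqm_in HN' JN' (eqm_sym HJ Hu) N'n'.
have nJu : ~ J u.
  move=> Ju; apply: nJn'; apply: (eqm_inJ HJ Hu); exact: HL.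
move=> v [w [Nw Hw]]; have [_ H] := NPs (ex_intro _ u (conj Pu nJu)) w Nw.
exact: eqm_in HN' JN' Hw H.
Qed.

Lemma lmap_iso J N r : ideal2 J -> minimal_over J N -> (exists v, lmap J N r v /\ ~ J v) ->
  iso_over J N (lmap J N r).
Proof.
move=> [HJ HL] [HN JN [m [Nm nJm]] Hmin] [v0 [[u0 [Nu0 Hu0]] nJv0]].
exists (fun u => r * u); split; first split.
- by move=> x Nx; exists x; split => //; apply: eqm_refl.
- by move=> x _ Jx; apply: HL.
- by move=> x y _ _; rewrite mulrDr subrr; exact: ri0.
- by move=> x s _; rewrite mulrA subrr; exact: ri0.
- move=> x Nx Jrx; apply: NNPP => nJx.
  pose Ps := fun u => N u /\ J (r * u).
  have HPs : right_ideal Ps.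
    split.
    - split; [exact: ri0 | rewrite mulr0; exact: ri0].
    - move=> a b [Na Ha] [Nb Hb]; split; [exact: riB | rewrite mulrBr; exact: riB].
    - move=> a s [Na Ha]; split; [exact: riMr | rewrite mulrA; exact: riMr].
  have JPs : subR J Ps by move=> u Ju; split; [exact: JN | exact: HL].
  have [_ H] := Hmin Ps HPs JPs (fun u (H : Ps u) => proj1 H) (ex_intro _ x (conj (conj Nx Jrx) nJx)) u0 Nu0.
  apply: nJv0; exact: eqm_inJ HJ Hu0 H.
- move=> y [u [Nu Hu]]; exists u; split => //; exact: eqm_sym.
Qed.

Lemma min_ri J N : minimal_over J N -> right_ideal N. Proof. by case. Qed.
Lemma min_J J N : minimal_over J N -> subR J N. Proof. by case. Qed.

Lemma lmul_min J N r y : ideal2 J -> minimal_over J N -> N y ->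
  exists N', minimal_over J N' /\ N' (r * y).
Proof.
move=> HJ HN Ny; case: (classic (J (r * y))) => Jry.
  exists N; split => //; exact: (min_J HN).
exists (lmap J N r); split.
  apply: lmap_min => //; exists (r * y); split => //; exists y; split => //; exact: eqm_refl HJ.1.
exists y; split => //; exact: eqm_refl HJ.1.
Qed.

Lemma soc_ideal J : ideal2 J -> ideal2 (soc_over J).
Proof.
move=> HJ; rewrite soc_span; split.
  apply: span_ri; first exact: HJ.1.
  - by move=> y [N [HN Ny]]; exists N; split => //; apply: riN (min_ri HN) Ny.
  - by move=> y r [N [HN Ny]]; exists N; split => //; apply: riMr (min_ri HN) Ny.
move=> x r; apply: span_mull => // y [N [HN Ny]]; exact: (lmul_min r HJ HN Ny).
Qed.

Lemma soc_infl J x : J x -> soc_over J x.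
Proof. exact: span_in. Qed.
End Hom.


Section Tower.
Variable R : nzRingType.
Implicit Types (J K U A B M N : R -> Prop) (x y z r : R).

Lemma st_0 J : socle_term J -> J 0.
Proof.
elim => [//|I _ IH|C [I0 C0] _ IH]; first exact: soc_infl.
by exists I0; split => //; apply: IH.
Qed.

Lemma subR_eq A B : subR A B -> subR B A -> A = B.
Proof. move=> H1 H2; apply: predext => x; split; [exact: H1 | exact: H2]. Qed.

Definition extreme (c : R -> Prop) := forall x : R -> Prop, socle_term x -> subR x c -> ~ subR c x -> subR (soc_over x) c.

Lemma tower1 (c : R -> Prop) : socle_term c -> extreme c ->
  forall x : R -> Prop, socle_term x -> subR x c \/ subR (soc_over c) x.
Proof.
move=> Tc Ec x; elim => [|J TJ IH|C ne TC IH].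
- by left => y ->; exact: st_0.
- case: IH => [Jc|cJ].
    case: (classic (subR c J)) => [cJ|ncJ].
      by right; rewrite (subR_eq Jc cJ).
    by left; exact: Ec.
  by right => y /cJ; exact: soc_infl.
- case: (classic (forall I, C I -> subR I c)) => [H|H].
    by left => y [I [CI Iy]]; exact: H CI _ Iy.
  have [I HI] := not_all_ex_not _ _ H.
  have [CI nIc] := imply_to_and _ _ HI.
  case: (IH I CI) => // sI; right => y Hy; exists I; split => //; exact: sI.
Qed.

Lemma tower2 (c : R -> Prop) : socle_term c -> extreme c.
Proof.
elim => [|J TJ IH|C ne TC IH].
- move=> x Tx _ H; exfalso; apply: H => y ->; exact: st_0.
- move=> x Tx xs ns; case: (tower1 TJ IH Tx) => [xJ|sJx]; last by exfalso; apply: ns.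
  case: (classic (subR J x)) => [Jx|nJx].
    by rewrite (subR_eq xJ Jx) => y.
  by move=> y /(IH x Tx xJ nJx); exact: soc_infl.
- move=> x Tx xU nU.
  have [I HI] : exists I, C I /\ ~ subR I x.
    apply: NNPP => H; apply: nU => y [I [CI Iy]]; apply: NNPP => nx.
    by apply: H; exists I; split => // H'; apply: nx; apply: H'.
  case: HI => CI nIx.
  case: (tower1 (TC I CI) (IH I CI) Tx) => [xI|sIx].
    move=> y /(IH I CI x Tx xI nIx) Iy; by exists I.
  by exfalso; apply: nIx => y /soc_infl /sIx.
Qed.

Lemma tower (c x : R -> Prop) : socle_term c -> socle_term x -> subR x c \/ subR (soc_over c) x.
Proof. move=> Tc Tx; exact: (tower1 Tc (tower2 Tc) Tx). Qed.

Lemma st_comp (a b : R -> Prop) : socle_term a -> socle_term b -> subR a b \/ subR b a.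
Proof.
move=> Ta Tb; case: (tower Ta Tb) => H; [by right | left => y /soc_infl; exact: H].
Qed.

Lemma fixtop K : socle_term K -> subR (soc_over K) K -> forall J, socle_term J -> subR J K.
Proof.
move=> TK HK J; elim => [|J' TJ IH|C ne TC IH].
- by move=> y ->; exact: st_0.
- case: (tower TJ TK) => // KJ; by rewrite (subR_eq IH KJ).
- by move=> y [I [CI Iy]]; exact: IH CI _ Iy.
Qed.

Lemma st_ideal J : socle_term J -> ideal2 J.
Proof.
elim => [|I _ IH|C [I0 C0] TC IH].
- split; first split.
  + by [].
  + by move=> x y -> ->; rewrite subr0.
  + by move=> x r ->; rewrite mul0r.
  + by move=> x r ->; rewrite mulr0.
- exact: soc_ideal.
- split; first split.
  + by exists I0; split => //; exact: st_0 (TC _ C0).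
  + move=> x y [I1 [C1 H1]] [I2 [C2 H2]].
    case: (st_comp (TC _ C1) (TC _ C2)) => H.
      by exists I2; split => //; apply: riB (IH _ C2).1 (H _ H1) H2.
    by exists I1; split => //; apply: riB (IH _ C1).1 H1 (H _ H2).
  + by move=> x r [I1 [C1 H1]]; exists I1; split => //; apply: riMr (IH _ C1).1 H1.
  + by move=> x r [I1 [C1 H1]]; exists I1; split => //; apply: (IH _ C1).2.
Qed.
End Tower.


Section Ess.
Variable R : nzRingType.
Implicit Types (J K U A B M N : R -> Prop) (x y z r w : R).

Definition span1 J w := fun v => exists a, J (v - w * a).

Lemma span1_ri J w : right_ideal J -> right_ideal (span1 J w).
Proof.
move=> HJ; split.
- by exists 0; rewrite mulr0 subr0; exact: ri0.
- move=> x y [a Ha] [b Hb]; exists (a - b); rewrite mulrBr; exact: eqmB.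
- move=> x s [a Ha]; exists (a * s); rewrite mulrA; exact: eqmMr.
Qed.
Lemma span1_J J w : subR J (span1 J w).
Proof. by move=> v Jv; exists 0; rewrite mulr0 subr0. Qed.
Lemma span1_w J w : right_ideal J -> span1 J w w.
Proof. by move=> HJ; exists 1; rewrite mulr1 subrr; exact: ri0. Qed.

Lemma core U : ideal2 U -> forall n (s : seq R) w, size s = n ->
  (forall y, y \in s -> exists N, minimal_over U N /\ N y) ->
  U (w - \sum_(y <- s) y) -> ~ U w ->
  exists a, ~ U (w * a) /\ minimal_over U (span1 U (w * a)).
Proof.
move=> [HU HL]; elim/ltn_ind => n IH [|y s'] w Hs HQ Hw nUw.
  by exfalso; apply: nUw; move: Hw; rewrite big_nil subr0.
case: (classic (exists a, ~ U (w * a) /\ U (w * a - \sum_(y <- map (fun y => y * a) s') y))).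
  move=> [a [nUa Ha]].
  have Hlt : (size (map (fun y : R => (y * a)%R) s') < n)%N by rewrite size_map -Hs.
  have HQ' : forall u, u \in map (fun y : R => (y * a)%R) s' -> exists N, minimal_over U N /\ N u.
    move=> u /mapP [v Hv ->].
    have [N [HN Nv]] := HQ v (introT orP (or_intror Hv)).
    by exists N; split => //; apply: riMr (min_ri HN) Nv.
  have [a' [H1 H2]] := IH _ Hlt (map (fun y : R => (y * a)%R) s') (w * a) erefl HQ' Ha nUa.
  by exists (a * a'); rewrite mulrA.
move=> Hno.
have [N [HN Ny]] := HQ y (mem_head _ _).
have Dk : forall a, U (y * a) -> U (w * a).
  move=> a Uya; apply: NNPP => nUwa; apply: Hno; exists a; split => //.
  rewrite big_map -mulr_suml.
  have Hw' : eqm U w (y + \sum_(y <- s') y) by move: Hw; rewrite big_cons.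
  have H1 := eqmMr a HU Hw'; rewrite mulrDl in H1.
  have H2 := eqmB HU H1 (eqm_refl ((\sum_(y <- s') y) * a) HU).
  rewrite addrK in H2; exact: (eqm_inJ HU H2 Uya).
exists 1; rewrite mulr1; split => //.
split; [exact: span1_ri | exact: span1_J | by exists w; split => //; exact: span1_w |].
move=> N' HN' UN' N's [n' [N'n' nUn']].
pose Ps := fun a => N' (w * a).
pose Qs := fun q => exists a, Ps a /\ U (q - y * a).
have HQs : right_ideal Qs.
  split.
  - exists 0; rewrite /Ps !mulr0 subr0; split; [exact: (ri0 HN') | exact: ri0].
  - move=> q1 q2 [a1 [P1 H1]] [a2 [P2 H2]]; exists (a1 - a2); split.
      by rewrite /Ps mulrBr; apply: riB.
    rewrite mulrBr; exact: eqmB.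
  - move=> q t [a [P1 H1]]; exists (a * t); split.
      by rewrite /Ps mulrA; apply: riMr.
    rewrite mulrA; exact: eqmMr.
have UQs : subR U Qs.
  move=> q Uq; exists 0; rewrite /Ps !mulr0 subr0; split => //; exact: (ri0 HN').
have QsN : subR Qs N.
  move=> q [a [_ H]]; exact: (eqm_in (min_ri HN) (min_J HN) H (riMr a (min_ri HN) Ny)).
case: (N's _ N'n') => a0 Ha0.
have Pa0 : Ps a0 by apply: (eqm_in HN' UN' (eqm_sym HU Ha0) N'n').
have nUya0 : ~ U (y * a0).
  by move=> /Dk Uw; apply: nUn'; apply: (eqm_inJ HU Ha0 Uw).
have HNri := min_ri HN.
case: (HN) => _ _ _ Hmin.
have NQs := Hmin Qs HQs UQs QsN (ex_intro _ (y * a0) (conj (ex_intro _ a0 (conj Pa0 (eqm_refl _ HU))) nUya0)).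
move=> v [b Hb].
have [a [Pa Hya]] := NQs _ (riMr b HNri Ny).
have : U (y * (b - a)) by rewrite mulrBr.
move/Dk; rewrite mulrBr => Hwba.
exact: (eqm_in HN' UN' (eqm_tr HU Hb Hwba) Pa).
Qed.
End Ess.

Section Ess2.
Variable R : nzRingType.
Implicit Types (J K U A B M N : R -> Prop) (x y z r w : R).

Lemma essential I : semiartinian R -> socle_term I -> forall c, ~ I c ->
  exists q M, [/\ minimal_over I M, M (c * q) & ~ I (c * q)].
Proof.
move=> [J0 [TJ0 HJ0]] TI c nIc.
have HI := st_ideal TI.
pose C := fun K : R -> Prop => socle_term K /\ forall a, K (c * a) -> I (c * a).
pose U := fun x => exists K, C K /\ K x.
have TU : socle_term U.
  apply: (@stU R C); first by exists I; split => //.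
  by move=> K [].
have HU := st_ideal TU.
have UC : forall a, U (c * a) -> I (c * a) by move=> a [K [[_ HK] Ka]]; exact: HK.
have IU : subR I U by move=> x Ix; exists I; split => //.
have [r [Hr nIr]] : exists r, soc_over U (c * r) /\ ~ I (c * r).
  apply: NNPP => H.
  have CS : C (soc_over U).
    split; first exact: stS.
    move=> a Ha; apply: NNPP => nI; apply: H; exists a; split => //.
  have sub : subR (soc_over U) U by move=> x Hx; exists (soc_over U); split.
  have Uc := fixtop TU sub TJ0 (HJ0 c).
  apply: nIc; have := UC 1; rewrite mulr1; by apply.
have nUr : ~ U (c * r) by move=> h; apply: nIr; exact: UC.
case: Hr => s [Hs Hsum].
have [a [nUa Hmin]] := core HU erefl Hs Hsum nUr.
have Ww : forall b, c * r * a * b = c * (r * a * b) by move=> b; rewrite !mulrA.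
exists (r * a), (span1 I (c * r * a)); rewrite mulrA.
split; last by move=> h; apply: nUa; exact: IU.
  2: exact: span1_w HI.1.
set w := c * r * a.
split; [exact: span1_ri HI.1 | exact: span1_J | exists w; split; [exact: span1_w HI.1 | by move=> h; apply: nUa; exact: IU] |].
move=> N' HN' IN' N's [n' [N'n' nIn']].
pose N'' := fun v => exists n, N' n /\ U (v - n).
have HN'' : right_ideal N''.
  split.
  - exists 0; rewrite subr0; split; [exact: (ri0 HN') | exact: (ri0 HU.1)].
  - move=> x y [n1 [N1 H1]] [n2 [N2 H2]]; exists (n1 - n2); split; [exact: riB | exact: (eqmB HU.1 H1 H2)].
  - move=> x t [n1 [N1 H1]]; exists (n1 * t); split; [exact: riMr | exact: (eqmMr t HU.1 H1)].
have UN'' : subR U N'' by move=> v Uv; exists 0; rewrite subr0; split => //; exact: (ri0 HN').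
have N''s : subR N'' (span1 U w).
  move=> v [n [Nn Hn]]; have [b Hb] := N's _ Nn; exists b.
  exact: (eqm_tr HU.1 Hn (IU _ Hb)).
have nz : exists n, N'' n /\ ~ U n.
  exists n'; split; first by exists n'; rewrite subrr; split => //; exact: (ri0 HU.1).
  move=> Un'; have [b0 Hb0] := N's _ N'n'.
  have Uwb : U (w * b0) by apply: (eqm_inJ HU.1 (eqm_sym HU.1 (IU _ Hb0)) Un').
  rewrite /w Ww in Uwb; have := UC _ Uwb; rewrite -Ww -/w => Iwb.
  apply: nIn'; exact: (eqm_inJ HI.1 Hb0 Iwb).
case: Hmin => _ _ _ Hmin.
have H := Hmin N'' HN'' UN'' N''s nz.
move=> v [b Hb].
have [n [Nn Hn]] := H (w * b) (ex_intro (fun a0 => U (w * b - w * a0)) b (eqm_refl (w * b) HU.1)).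
have [b' Hb'] := N's _ Nn.
have Uwbb : U (w * (b - b')) by rewrite mulrBr; exact: (eqm_tr HU.1 Hn (IU _ Hb')).
rewrite /w Ww in Uwbb; have := UC _ Uwbb; rewrite -Ww -/w mulrBr => Iwbb.
apply: (eqm_in HN' IN' (eqm_tr HI.1 Hb (eqm_tr HI.1 Iwbb (eqm_sym HI.1 Hb'))) Nn).
Qed.
End Ess2.


Section Main.
Variable R : nzRingType.
Implicit Types (J K U A B M N : R -> Prop) (x y z r w : R).

Lemma idem_gen I M : vN_regular R -> ideal2 I -> minimal_over I M ->
  exists e, [/\ M e, ~ I e, e * e = e & forall u, M u -> exists t, eqm I u (e * t)].
Proof.
move=> Hreg [HI HL] HM; have HMc := HM; case: HMc => HMr IM [m [Mm nIm]] Hmin.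
have [x Hx] := Hreg m.
have ee : m * x * (m * x) = m * x by rewrite mulrA Hx.
have Me : M (m * x) by apply: riMr.
have nIe : ~ I (m * x) by move=> Ie; apply: nIm; rewrite -Hx; apply: riMr HI Ie.
exists (m * x); split => //.
have Hsub : subR (span1 I (m * x)) M.
  move=> v [a Ha]; apply: (eqm_in HMr IM Ha); exact: riMr.
have H := Hmin (span1 I (m * x)) (span1_ri (m * x) HI) (@span1_J _ I _) Hsub (ex_intro _ (m * x) (conj (span1_w (m * x) HI) nIe)).
move=> u /H [t Ht]; by exists t.
Qed.

Lemma homI J A B f x : hom_over J A B f -> A x -> B (f x).
Proof. by case=> H _ _ _; apply: H. Qed.

Lemma iso_eq J A B : right_ideal J -> subR A B -> subR B A -> iso_over J A B.
Proof.
move=> HJ AB BA; exists id; split.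
- split => //.
  + by move=> x y _ _; rewrite subrr; exact: ri0.
  + by move=> x r _; rewrite subrr; exact: ri0.
- by [].
- by move=> y By; exists y; split; [exact: BA | rewrite subrr; exact: ri0].
Qed.

Lemma homc_ri I M : right_ideal I -> right_ideal (hom_comp I M).
Proof.
move=> HI; rewrite homc_span; apply: span_ri => //.
- by move=> y [N [HN Hiso Ny]]; exists N; split => //; apply: riN (min_ri HN) Ny.
- by move=> y r [N [HN Hiso Ny]]; exists N; split => //; apply: riMr (min_ri HN) Ny.
Qed.

Lemma M_homc I M : right_ideal I -> minimal_over I M -> subR M (hom_comp I M).
Proof.
move=> HI HM u Mu; rewrite homc_span; apply: span_Q => //.
exists M; split => //; exact: iso_id.
Qed.

Lemma homc_M I M : right_ideal I -> minimal_over I M -> iso_over I (hom_comp I M) M ->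
  subR (hom_comp I M) M.
Proof.
move=> HI HM [f [Hf Hinj Hsur]].
have Hhc := homc_ri M HI.
have MH := M_homc HI HM.
case: (HM) => HMr IM [m [Mm nIm]] Hmin.
case: (Hf) => HfB Hf0 Hfadd Hfr.
pose Qf := fun y => exists n, M n /\ eqm I y (f n).
have f0 : I (f 0) by apply: Hf0; [exact: ri0 | exact: ri0].
have HQf : right_ideal Qf.
  split.
  - exists 0; split; [exact: ri0 | rewrite /eqm sub0r; exact: riN HI f0].
  - move=> y1 y2 [n1 [N1 H1]] [n2 [N2 H2]]; exists (n1 - n2); split; first exact: riB.
    apply: (eqm_tr HI (eqmB HI H1 H2)); apply: eqm_sym => //.
    exact: (hom_B HI Hhc Hf (MH _ N1) (MH _ N2)).
  - move=> y t [n [Nn Hn]]; exists (n * t); split; first exact: riMr.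
    apply: (eqm_tr HI (eqmMr t HI Hn)); apply: eqm_sym => //.
    exact: (hom_Mr t Hf (MH _ Nn)).
have IQf : subR I Qf by move=> y Iy; exists 0; split; [exact: ri0 | exact: riB].
have QfM : subR Qf M.
  move=> y [n [Nn Hn]]; apply: (eqm_in HMr IM Hn); apply: HfB; exact: MH.
have nz : exists n, Qf n /\ ~ I n.
  exists (f m); split; first by exists m; split => //; exact: eqm_refl.
  by move=> H; apply: nIm; apply: Hinj => //; exact: MH.
have MQ := Hmin Qf HQf IQf QfM nz.
move=> z Hz; have [n [Nn Hn]] := MQ _ (HfB z Hz).
have Hzn : I (z - n).
  apply: Hinj; first exact: riB Hhc Hz (MH _ Nn).
  apply: (eqm_inJ HI (hom_B HI Hhc Hf Hz (MH _ Nn))); exact: Hn.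
exact: (eqm_in HMr IM Hzn Nn).
Qed.

Section Dir.
Variables (I : R -> Prop) (Hreg : vN_regular R) (HI2 : ideal2 I).
Let HI := HI2.1.
Let HL := HI2.2.

Lemma i_ii : quot_comm I -> cond_ii I.
Proof.
move=> Hc M HM.
have [e [Me nIe ee Hgen]] := idem_gen Hreg HI2 HM.
case: (HM) => HMr IM _ _.
have hlin : forall h u t, hom_over I M M h -> M u -> eqm I u (e * t) -> eqm I (h u) (h e * t).
  move=> h u t Hh Mu Hu.
  apply: (eqm_tr HI (hom_eqm HI HMr Hh Mu (riMr t HMr Me) Hu)); exact: (hom_Mr t Hh Me).
split.
  move=> f g Hf Hg x Mx.
  have [t Ht] := Hgen x Mx.
  have [sf Hsf] := Hgen _ (homI Hf Me).
  have [sg Hsg] := Hgen _ (homI Hg Me).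
  have Mgx := homI Hg Mx; have Mfx := homI Hf Mx.
  have Hgx : eqm I (g x) (e * (sg * t)).
    by rewrite mulrA; apply: (eqm_tr HI (hlin g x t Hg Mx Ht)); exact: eqmMr.
  have Hfx : eqm I (f x) (e * (sf * t)).
    by rewrite mulrA; apply: (eqm_tr HI (hlin f x t Hf Mx Ht)); exact: eqmMr.
  have H1 : eqm I (f (g x)) (e * (sf * (sg * t))).
    rewrite mulrA; apply: (eqm_tr HI (hlin f _ _ Hf Mgx Hgx)); exact: eqmMr.
  have H2 : eqm I (g (f x)) (e * (sg * (sf * t))).
    rewrite mulrA; apply: (eqm_tr HI (hlin g _ _ Hg Mfx Hfx)); exact: eqmMr.
  apply: (eqm_tr HI H1); apply: (eqm_tr HI _ (eqm_sym HI H2)).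
  apply: eqmMl => //; rewrite !mulrA; apply: eqmMr => //; exact: Hc.
have NM : forall N, minimal_over I N -> iso_over I N M -> subR N M.
  move=> N HN [f [Hf Hinj _]] n Nn.
  have HNr := min_ri HN.
  have Nn1 : N (n * (1 - e)) by apply: riMr.
  have : I (n * (1 - e)).
    apply: Hinj => //.
    apply: (eqm_inJ HI (hom_Mr (1 - e) Hf Nn)).
    have [t Ht] := Hgen _ (homI Hf Nn).
    apply: (eqm_inJ HI (eqmMr (1 - e) HI Ht)).
    apply: (eqm_inJ HI (eqmMr (1 - e) HI (Hc e t))).
    by rewrite -mulrA mulrBr mulr1 ee subrr mulr0; exact: ri0.
  rewrite mulrBr mulr1 => H.
  apply: (eqm_in HMr IM H); exact: (eqm_in HMr IM (Hc n e) (riMr n HMr Me)).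
apply: iso_eq => //.
  move=> x; rewrite homc_span => -[s [Hs Hx]].
  apply: (eqm_in HMr IM Hx); apply: riS => // y /Hs [N [HN Hiso Ny]]; exact: NM HN Hiso _ Ny.
exact: M_homc.
Qed.

Lemma B1 : cond_ii I -> forall M, minimal_over I M -> forall r u, M u -> M (r * u).
Proof.
move=> Hii M HM r u Mu.
have [_ Hiso] := Hii M HM.
have HcM := homc_M HI HM Hiso.
case: (classic (I (r * u))) => Iru; first exact: (min_J HM).
have nz : exists v, lmap I M r v /\ ~ I v.
  by exists (r * u); split => //; exists u; split => //; exact: eqm_refl.
have Hmin' := lmap_min HI2 HM nz.
have Hiso' := iso_sym HI (min_ri HM) (lmap_ri r HI (min_ri HM)) (lmap_iso HI2 HM nz).
apply: HcM; rewrite homc_span; apply: span_Q => //.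
exists (lmap I M r); split => //; exists u; split => //; exact: eqm_refl.
Qed.

Lemma ii_i : semiartinian R -> socle_term I -> cond_ii I -> quot_comm I.
Proof.
move=> Hsa TI Hii.
have key : forall M, minimal_over I M -> forall x y u, M u -> I ((x * y - y * x) * u).
  move=> M HM x y u Mu.
  have B1M := B1 Hii HM.
  have [Hec _] := Hii M HM.
  have [e [Me nIe ee Hgen]] := idem_gen Hreg HI2 HM.
  case: (HM) => HMr IM _ Hmin.
  have eu : forall u, M u -> eqm I u (e * u).
    move=> v Mv; have [t Ht] := Hgen v Mv.
    apply: (eqm_tr HI Ht); apply: eqm_sym => //.
    have := eqmMl e HI2 Ht; rewrite mulrA ee => H; exact: (eqm_tr HI H (eqm_refl _ HI)).
  have re : forall r, eqm I (r * e) (e * r * e).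
    by move=> r; rewrite -mulrA; apply: eu; apply: B1M.
  have er : forall r, eqm I (e * r) (e * r * e).
    move=> r; apply: NNPP => nI.
    pose z := e * r - e * r * e.
    have Mz : M z by apply: (riB HMr); [exact: (riMr r HMr Me) | exact: (riMr e HMr (riMr r HMr Me))].
    have Hsub : subR (span1 I z) M.
      move=> v [a Ha]; apply: (eqm_in HMr IM Ha); exact: riMr.
    have HzM := Hmin (span1 I z) (span1_ri z HI) (@span1_J _ I _) Hsub (ex_intro _ z (conj (span1_w z HI) nI)).
    have [s0 Hs0] := HzM e Me.
    have H1 := eqmMr e HI Hs0; rewrite ee in H1.
    have Mse : M (s0 * e) by apply: B1M.
    have H2 := eqmMl z HI2 (eu _ Mse).
    have ze : z * e = 0 by rewrite /z mulrBl -(mulrA (e * r) e e) ee subrr.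
    rewrite !mulrA ze !mul0r in H2.
    apply: nIe; apply/eqm0 => //; exact: (eqm_tr HI H1 H2).
  have ce : forall r, eqm I (e * r) (r * e).
    move=> r; exact: (eqm_tr HI (er r) (eqm_sym HI (re r))).
  have Xe : forall r, eqm I (e * r * e) (r * e).
    move=> r; have := eqmMr e HI (ce r); by rewrite -(mulrA r e e) ee.
  pose X := e * x * e; pose Y := e * y * e.
  have homL : forall a, hom_over I M M (fun v => a * v).
    move=> a; split.
    - by move=> v Mv; apply: B1M.
    - by move=> v _ Iv; apply: HL.
    - by move=> v w _ _; rewrite mulrDr subrr; exact: ri0.
    - by move=> v w _; rewrite mulrA subrr; exact: ri0.
  have HXY := Hec _ _ (homL X) (homL Y) e Me.
  have XeX : X * e = X by rewrite /X -mulrA ee.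
  have YeY : Y * e = Y by rewrite /Y -mulrA ee.
  rewrite /= YeY XeX in HXY.
  have XY : forall a b, eqm I (e * a * e * (e * b * e)) (a * b * e).
    move=> a b; apply: (eqm_tr HI (eqmM HI2 (Xe a) (Xe b))).
    have H := eqmMr e HI (eqmMl a HI2 (ce b)).
    have E1 : a * e * (b * e) = a * (e * b) * e by rewrite !mulrA.
    have E2 : a * (b * e) * e = a * b * e by rewrite mulrA -(mulrA (a * b) e e) ee.
    by rewrite E1 -E2.
  have Hce : I ((x * y - y * x) * e).
    rewrite mulrBl; apply: (eqm_tr HI (eqm_sym HI (XY x y))).
    exact: (eqm_tr HI HXY (XY y x)).
  have Hu := eu u Mu.
  suff : eqm I ((x * y - y * x) * u) 0 by rewrite /eqm subr0.
  apply: (eqm_tr HI (eqmMl (x * y - y * x) HI2 Hu)); rewrite /eqm subr0 mulrA; exact: (riMr u HI Hce).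
move=> x y; apply: NNPP => nI.
have [q [M [HM Mcq nIcq]]] := essential Hsa TI nI.
have [w Hw] := Hreg ((x * y - y * x) * q).
have Mu : M (q * w * ((x * y - y * x) * q)) by apply: (B1 Hii HM).
set c := x * y - y * x.
have E : c * (q * w * (c * q)) = c * q * w * (c * q) by rewrite !mulrA.
apply: nIcq; have := key M HM x y _ Mu; by rewrite -/c E Hw.
Qed.
End Dir.
End Main.


Record qideal (R : nzRingType) := QIdeal {
  qP : R -> Prop;
  q0 : qP 0;
  qsub : forall x y, qP x -> qP y -> qP (x - y);
  qmr : forall x r, qP x -> qP (x * r);
  qml : forall x r, qP x -> qP (r * x);
  q1 : ~ qP 1 }.

Section Quot.
Variables (R : nzRingType) (J : qideal R).
Let P := qP J.
Local Notation "x ~ y" := (P (x - y)) (at level 70).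
Lemma Padd x y : P x -> P y -> P (x + y).
Proof. move=> Hx Hy; rewrite -[y]opprK; apply: qsub => //; rewrite -sub0r; apply: qsub => //; exact: q0. Qed.
Lemma Popp x : P x -> P (- x).
Proof. move=> Hx; rewrite -sub0r; apply: qsub => //; exact: q0. Qed.
Lemma Ptr x y z : x ~ y -> y ~ z -> x ~ z.
Proof. move=> H1 H2; have := Padd H1 H2; by rewrite subrKA. Qed.
Lemma Psym x y : x ~ y -> y ~ x.
Proof. by move/Popp; rewrite opprB. Qed.
Lemma Prefl x : x ~ x.
Proof. rewrite subrr; exact: q0. Qed.
Lemma PD x x' y y' : x ~ x' -> y ~ y' -> x + y ~ x' + y'.
Proof. move=> H1 H2; have := Padd H1 H2; by rewrite opprD addrACA. Qed.
Lemma PN x x' : x ~ x' -> - x ~ - x'.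
Proof. move/Popp; by rewrite opprB opprK addrC. Qed.
Lemma PM x x' y y' : x ~ x' -> y ~ y' -> x * y ~ x' * y'.
Proof.
move=> H1 H2; have := Padd (qmr y H1) (qml x' H2).
by rewrite mulrBl mulrBr addrA subrK.
Qed.

Definition qcr (x : R) : R := epsilon (inhabits x) (fun y => x ~ y).
Lemma qcrP x : x ~ qcr x.
Proof. rewrite /qcr; apply: (epsilon_spec (inhabits x) (fun y => x ~ y)); exists x; exact: Prefl. Qed.
Lemma qcr_eq x y : x ~ y -> qcr x = qcr y.
Proof.
move=> H; rewrite /qcr; have -> : (fun z => x ~ z) = (fun z => y ~ z).
  apply: predext => z; split => Hz; [exact: Ptr (Psym H) Hz | exact: Ptr H Hz].
by have -> : inhabits x = inhabits y by apply: proof_irrelevance.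
Qed.
Lemma qcr_id x : qcr (qcr x) = qcr x.
Proof. apply: qcr_eq; apply: Psym; exact: qcrP. Qed.
Lemma qcr_eqP x y : qcr x = qcr y <-> x ~ y.
Proof.
split; last exact: qcr_eq.
move=> H; apply: Ptr (qcrP x) _; rewrite H; exact: Psym (qcrP y).
Qed.

Definition qT := {x : R | qcr x == x}.
HB.instance Definition _ := Choice.on qT.
Definition qin (x : R) : qT := exist _ (qcr x) (introT eqP (qcr_id x)).
Lemma qinK (a : qT) : qin (val a) = a.
Proof. apply: val_inj => /=; apply/eqP; exact: (valP a). Qed.
Lemma qin_eq x y : qin x = qin y <-> x ~ y.
Proof. rewrite -qcr_eqP; split => [H|H]; [exact: (congr1 val H) | exact: val_inj]. Qed.
Lemma qvalin x : val (qin x) ~ x.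
Proof. exact: Psym (qcrP x). Qed.

Definition qadd (a b : qT) := qin (val a + val b).
Definition qopp (a : qT) := qin (- val a).
Definition qzero := qin 0.
Definition qmul (a b : qT) := qin (val a * val b).
Definition qone := qin 1.


Lemma qaddA : associative qadd.
Proof.
move=> a b c; apply/qin_eq; apply: Ptr (PD (Prefl _) (qvalin _)) _.
rewrite addrA; apply: Psym; exact: PD (qvalin _) (Prefl _).
Qed.
Lemma qaddC : commutative qadd.
Proof. by move=> a b; rewrite /qadd addrC. Qed.
Lemma qadd0 : left_id qzero qadd.
Proof. move=> a; rewrite -[RHS]qinK; apply/qin_eq; rewrite -[X in _ ~ X]add0r; exact: PD (qvalin _) (Prefl _). Qed.
Lemma qaddN : left_inverse qzero qopp qadd.
Proof. move=> a; apply/qin_eq; rewrite -(addNr (val a)); exact: PD (qvalin _) (Prefl _). Qed.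
HB.instance Definition _ := GRing.isZmodule.Build qT qaddA qaddC qadd0 qaddN.
Lemma qmulA : associative qmul.
Proof.
move=> a b c; apply/qin_eq; apply: Ptr (PM (Prefl _) (qvalin _)) _.
rewrite mulrA; apply: Psym; exact: PM (qvalin _) (Prefl _).
Qed.
Lemma qmul1 : left_id qone qmul.
Proof. move=> a; rewrite -[RHS]qinK; apply/qin_eq; rewrite -[X in _ ~ X]mul1r; exact: PM (qvalin _) (Prefl _). Qed.
Lemma qmulr1 : right_id qone qmul.
Proof. move=> a; rewrite -[RHS]qinK; apply/qin_eq; rewrite -[X in _ ~ X]mulr1; exact: PM (Prefl _) (qvalin _). Qed.
Lemma qmulDl : left_distributive qmul (@GRing.add qT).
Proof.
move=> a b c; apply/qin_eq; apply: Ptr (PM (qvalin _) (Prefl _)) _.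
rewrite mulrDl; apply: Psym; exact: PD (qvalin _) (qvalin _).
Qed.
Lemma qmulDr : right_distributive qmul (@GRing.add qT).
Proof.
move=> a b c; apply/qin_eq; apply: Ptr (PM (Prefl _) (qvalin _)) _.
rewrite mulrDr; apply: Psym; exact: PD (qvalin _) (qvalin _).
Qed.
Lemma qone0 : qone != 0.
Proof. apply/eqP => /qin_eq; rewrite subr0; exact: q1. Qed.
HB.instance Definition _ := GRing.Zmodule_isNzRing.Build qT qmulA qmul1 qmulr1 qmulDl qmulDr qone0.

Lemma qin_zmod : zmod_morphism qin.
Proof.
move=> x y; apply/qin_eq; apply: Psym; apply: (PD (qvalin _)); apply: Ptr (qvalin _) _; exact: PN (qvalin _).
Qed.
HB.instance Definition _ := GRing.isZmodMorphism.Build R qT qin qin_zmod.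
Lemma qin_mon : monoid_morphism qin.
Proof.
split => // x y; apply/qin_eq; apply: Psym; exact: PM (qvalin _) (qvalin _).
Qed.
HB.instance Definition _ := GRing.isMonoidMorphism.Build R qT qin qin_mon.
Definition qproj : {rmorphism R -> qT} := qin.
Lemma qmulE (a b : qT) : a * b = qin (val a * val b). Proof. by []. Qed.
Lemma qval_in (a : qT) : qin (val a) = a. Proof. exact: qinK. Qed.
Lemma qaddV (a b : qT) : val (a + b) ~ val a + val b. Proof. exact: qvalin. Qed.
Lemma qmulV (a b : qT) : val (a * b) ~ val a * val b. Proof. exact: qvalin. Qed.
Lemma qoneV : val (1 : qT) ~ 1. Proof. exact: qvalin. Qed.
Lemma qzeroE : (0 : qT) = qin 0. Proof. by []. Qed.
Lemma qprojE x : qproj x = qin x. Proof. by []. Qed.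
Lemma qin0 x : qin x = 0 <-> P x.
Proof. rewrite qzeroE qin_eq subr0; done. Qed.
End Quot.


Section Constr.
Variable R : nzRingType.
Variables (I : R -> Prop) (Hreg : vN_regular R) (HI2 : ideal2 I) (Hc : quot_comm I).
Let HI := HI2.1.
Let HL := HI2.2.

Lemma iso_sub M N : minimal_over I M -> minimal_over I N -> iso_over I N M -> subR N M.
Proof.
move=> HM HN [f [Hf Hinj _]] n Nn.
have [e [Me nIe ee Hgen]] := idem_gen Hreg HI2 HM.
case: (HM) => HMr IM _ _.
have HNr := min_ri HN.
have Nn1 : N (n * (1 - e)) by apply: riMr.
have : I (n * (1 - e)).
  apply: Hinj => //.
  apply: (eqm_inJ HI (hom_Mr (1 - e) Hf Nn)).
  have [t Ht] := Hgen _ (homI Hf Nn).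
  apply: (eqm_inJ HI (eqmMr (1 - e) HI Ht)).
  apply: (eqm_inJ HI (eqmMr (1 - e) HI (Hc e t))).
  by rewrite -mulrA mulrBr mulr1 ee subrr mulr0; exact: ri0.
rewrite mulrBr mulr1 => H.
apply: (eqm_in HMr IM H); exact: (eqm_in HMr IM (Hc n e) (riMr n HMr Me)).
Qed.

Lemma min_eq M N : minimal_over I M -> minimal_over I N -> subR N M -> M = N.
Proof.
move=> HM HN NM; apply: subR_eq => //.
case: (HN) => HNr IN [n [Nn nIn]] _.
case: (HM) => _ _ _ Hmin; apply: Hmin => //; by exists n.
Qed.

Lemma min_meet M N z : minimal_over I M -> minimal_over I N -> M z -> N z -> ~ I z -> M = N.
Proof.
move=> HM HN Mz Nz nIz.
pose MN := fun x => M x /\ N x.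
have HMN : right_ideal MN.
  split.
  - split; [exact: ri0 (min_ri HM) | exact: ri0 (min_ri HN)].
  - by move=> x y [? ?] [? ?]; split; apply: riB => //; [exact: min_ri HM | exact: min_ri HN].
  - by move=> x r [? ?]; split; apply: riMr => //; [exact: min_ri HM | exact: min_ri HN].
have IMN : subR I MN by move=> x Ix; split; [exact: (min_J HM Ix) | exact: (min_J HN Ix)].
case: (HM) => _ _ _ Hmin.
have := Hmin MN HMN IMN (fun x (h : MN x) => h.1) (ex_intro _ z (conj (conj Mz Nz) nIz)).
move=> H; symmetry; apply: (min_eq HN HM) => x /H [_ ?]; done.
Qed.

Section Ann.
Variables (M : R -> Prop) (HM : minimal_over I M).
Definition annP x := forall u, M u -> I (u * x).
Lemma ann0 : annP 0. Proof. by move=> u _; rewrite mulr0; exact: ri0. Qed.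
Lemma annB x y : annP x -> annP y -> annP (x - y).
Proof. by move=> Hx Hy u Mu; rewrite mulrBr; apply: riB => //; [exact: Hx | exact: Hy]. Qed.
Lemma annMr x r : annP x -> annP (x * r).
Proof. by move=> Hx u Mu; rewrite mulrA; apply: riMr => //; exact: Hx. Qed.
Lemma annMl x r : annP x -> annP (r * x).
Proof. by move=> Hx u Mu; rewrite mulrA; apply: Hx; apply: riMr => //; exact: min_ri HM. Qed.
Lemma ann1 : ~ annP 1.
Proof. case: (HM) => _ _ [m [Mm nIm]] _ H; apply: nIm; have := H m Mm; by rewrite mulr1. Qed.
Definition annq : qideal R := QIdeal ann0 annB annMr annMl ann1.
End Ann.

Definition Idx := {M : R -> Prop | minimal_over I M}.
Definition cI (b : Idx) := proj1_sig b.
Definition KI (b : Idx) : nzRingType := qT (annq (proj2_sig b)).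
Definition phiI (b : Idx) : {rmorphism R -> KI b} := qproj (annq (proj2_sig b)).
Definition psiI (b : Idx) (a : KI b) : R -> R := fun u => u * val a.

Definition isgen (M : R -> Prop) e := [/\ M e, ~ I e, e * e = e & forall u, M u -> exists t, eqm I u (e * t)].
Definition eI (b : Idx) : R := epsilon (inhabits 0) (isgen (cI b)).
Lemma eIP b : isgen (cI b) (eI b).
Proof.
rewrite /eI; apply: (epsilon_spec (inhabits 0) (isgen (cI b))).
have [e H] := idem_gen Hreg HI2 (proj2_sig b); by exists e.
Qed.

Lemma gen_eu M e : isgen M e -> forall u, M u -> eqm I u (e * u).
Proof.
case=> Me nIe ee Hgen v Mv; have [t Ht] := Hgen v Mv.
apply: (eqm_tr HI Ht); apply: eqm_sym => //.
have := eqmMl e HI2 Ht; rewrite mulrA ee => H; exact: (eqm_tr HI H (eqm_refl _ HI)).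
Qed.

Lemma annE M (HM : minimal_over I M) e : isgen M e -> forall x, annP M x <-> I (e * x).
Proof.
move=> He x; have [Me _ _ _] := He; split; first by move=> H; apply: H.
move=> Iex u Mu; have := eqmMr x HI (eqm_tr HI (gen_eu He Mu) (Hc e u)); rewrite -mulrA => H.
apply: (eqm_inJ HI H); exact: (HI2.2 _ u Iex).
Qed.

Lemma phiE b x : phiI b x = 0 <-> I (eI b * x).
Proof. rewrite /phiI qprojE qin0 /=; exact: (annE (proj2_sig b) (eIP b)). Qed.

Lemma phi_eq b x y : phiI b x = phiI b y <-> I (eI b * (x - y)).
Proof.
split => H; first by apply/phiE; rewrite rmorphB H subrr.
by have /eqP := (phiE b (x - y)).2 H; rewrite rmorphB subr_eq0 => /eqP.
Qed.


Lemma sig_eqI (b b' : Idx) : cI b = cI b' -> b = b'.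
Proof.
move: b b' => [M HM] [M' HM'] /= E; subst M'.
by rewrite (proof_irrelevance _ HM HM').
Qed.

Lemma compI : components_index I cI.
Proof.
split.
- by move=> b; exact: (proj2_sig b).
- move=> N HN; exists (exist _ N HN); exact: iso_id.
- move=> b b' H; apply: sig_eqI; symmetry.
  exact: (min_eq (proj2_sig b') (proj2_sig b) (iso_sub (proj2_sig b') (proj2_sig b) H)).
Qed.

Lemma phiA b x : phiI b x = 0 <-> annP (cI b) x.
Proof. by rewrite /phiI qprojE qin0. Qed.

Lemma commI b (u v : KI b) : u * v = v * u.
Proof.
apply/(qin_eq (annq (proj2_sig b))) => w Mw; apply: HL; exact: Hc.
Qed.

Lemma endoI b : endo_ring_iso I (cI b) (@psiI b).
Proof.
set M := cI b.
pose HM : minimal_over I M := proj2_sig b.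
have HMr := min_ri HM.
have IM := min_J HM.
have [Me nIe ee Hgen] := eIP b.
set e := eI b in Me nIe ee Hgen.
split; first split.
- move=> a; split.
  + by move=> x Mx; apply: riMr.
  + by move=> x _ Ix; apply: riMr.
  + by move=> x y _ _; rewrite /psiI mulrDl subrr; exact: ri0.
  + move=> x r _; rewrite /psiI -!mulrA -mulrBr; apply: HL; exact: Hc.
- move=> a a' x Mx; rewrite /psiI -mulrDr -mulrBr; exact: (qaddV a a' x Mx).
- move=> a a' x Mx; rewrite /psiI.
  have H1 : eqm I (x * val (a * a')) (x * (val a * val a')).
    by rewrite /eqm -mulrBr; exact: (qmulV a a' x Mx).
  apply: (eqm_tr HI H1); rewrite -mulrA; apply: eqmMl => //; exact: Hc.
- move=> x Mx; rewrite /psiI; rewrite -[X in I (_ - X)]mulr1 -mulrBr. exact: (qoneV (annq (proj2_sig b)) x Mx).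
- move=> a a' H; rewrite -(qinK a) -(qinK a'); apply/qin_eq => x Mx.
  by rewrite mulrBr; exact: H.
- move=> f Hf; exists (qin (annq HM) (f e)) => x Mx.
  have H1 : eqm I (psiI (qin (annq HM) (f e)) x) (x * f e).
    by rewrite /psiI /eqm -mulrBr; exact: (qvalin (annq HM) (f e) x Mx).
  apply: (eqm_tr HI H1).
  have [t Ht] := Hgen x Mx.
  apply: (eqm_tr HI (Hc x (f e))).
  apply: (eqm_tr HI (eqmMl (f e) HI2 Ht)).
  rewrite mulrA.
  have H2 : eqm I (f e * e) (f e) by have := hom_Mr e Hf Me; rewrite ee => H; exact: eqm_sym.
  apply: (eqm_tr HI (eqmMr t HI H2)).
  apply: (eqm_tr HI (eqm_sym HI (hom_Mr t Hf Me))).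
  apply: eqm_sym => //; apply: (hom_eqm HI HMr Hf Mx _ Ht); exact: riMr.
Qed.

Hypothesis Hess : forall c, ~ I c -> exists q M, [/\ minimal_over I M, M (c * q) & ~ I (c * q)].

Lemma kerI x : I x <-> forall b, phiI b x = 0.
Proof.
split.
  move=> Ix b; apply/phiA => u Mu; exact: HL.
move=> H; apply: NNPP => nIx.
have [q [M [HM Mxq nIxq]]] := Hess nIx.
have /phiA Hann := H (exist _ M HM).
have Izx : I (x * q * x) by apply: Hann.
have [w Hw] := Hreg (x * q).
apply: nIxq; rewrite -Hw.
have H1 : eqm I (x * q * w * (x * q)) (x * q * (x * q * w)).
  rewrite -(mulrA (x * q) w); apply: eqmMl => //; exact: Hc.
apply: (eqm_inJ HI H1); rewrite !mulrA; apply: riMr => //; apply: riMr => //.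
Qed.

Lemma phi_unit_same b r : phiI b (eI b * r) = phiI b r.
Proof.
have [_ _ ee _] := eIP b.
apply/phi_eq; rewrite mulrBr mulrA ee subrr; exact: ri0.
Qed.

Lemma phi_unit_diff b b' r : b' <> b -> phiI b' (eI b * r) = 0.
Proof.
move=> ne; apply/phiE; rewrite mulrA; apply: riMr => //.
have [Me _ _ _] := eIP b; have [Me' _ _ _] := eIP b'.
apply: NNPP => nI; apply: ne; apply: sig_eqI.
apply: (min_meet (proj2_sig b') (proj2_sig b) _ _ nI).
  exact: riMr (min_ri (proj2_sig b')) Me'.
apply: (eqm_in (min_ri (proj2_sig b)) (min_J (proj2_sig b)) (Hc _ _)).
exact: riMr (min_ri (proj2_sig b)) Me.
Qed.

Definition PT := forall b : Idx, KI b.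
Definition RbarI := fun z : PT => exists x, forall b, z b = phiI b x.
Definition deq (b b' : Idx) := excluded_middle_informative (b = b').
Definition Nb (b : Idx) := fun w : PT => RbarI w /\ forall b', b' <> b -> w b' = 0.
Definition uvec (b : Idx) (r : R) : PT := fun b0 => phiI b0 (eI b * r).

Lemma uvec_R b r : RbarI (uvec b r). Proof. by exists (eI b * r). Qed.
Lemma uvec_N b r : Nb b (uvec b r).
Proof. split; first exact: uvec_R. by move=> b' ne; exact: phi_unit_diff. Qed.

Lemma Rbar_sub z w : RbarI z -> RbarI w -> RbarI (psub z w).
Proof. move=> [x Hx] [y Hy]; exists (x - y) => b; by rewrite /psub Hx Hy rmorphB. Qed.
Lemma Rbar_mul z w : RbarI z -> RbarI w -> RbarI (pmul z w).
Proof. move=> [x Hx] [y Hy]; exists (x * y) => b; by rewrite /pmul Hx Hy rmorphM. Qed.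
Lemma Rbar_0 : RbarI (pzero KI).
Proof. by exists 0 => b; rewrite rmorph0. Qed.

Lemma Nb_min b : prod_minimal RbarI (Nb b).
Proof.
have [Me nIe ee Hgen] := eIP b.
have HM := proj2_sig b.
split.
- split.
  + by move=> z [].
  + by split; [exact: Rbar_0 | by []].
  + move=> z w [Rz Hz] [Rw Hw]; split; first exact: Rbar_sub.
    by move=> b' ne; rewrite /psub Hz // Hw // subrr.
  + move=> z r [Rz Hz] Rr; split; first exact: Rbar_mul.
    by move=> b' ne; rewrite /pmul Hz // mul0r.
- exists (uvec b 1); split; first exact: uvec_N.
  by exists b; rewrite /uvec phi_unit_same rmorph1; apply/eqP; exact: oner_neq0.
move=> N' [N'R N'0 N'sub N'mul] N'N [w [N'w [b1 Hb1]]] z [[xz Hxz] Hz0].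
have [[xw Hxw] Hw0] := N'N _ N'w.
have E1 : b1 = b by apply: NNPP => ne; apply: Hb1; exact: Hw0.
subst b1.
have nI : ~ I (eI b * xw) by move=> H; apply: Hb1; rewrite Hxw; exact/phiE.
have Hsub : subR (span1 I (eI b * xw)) (cI b).
  move=> v [a Ha]; apply: (eqm_in (min_ri HM) (min_J HM) Ha); apply: riMr (min_ri HM) _; exact: riMr (min_ri HM) Me.
case: (HM) => _ _ _ Hmin.
have [y Hy] := Hmin _ (span1_ri _ HI) (@span1_J _ I _) Hsub (ex_intro _ _ (conj (span1_w _ HI) nI)) _ Me.
pose r : PT := fun b0 => phiI b0 (y * eI b * xz).
have Rr : RbarI r by exists (y * eI b * xz).
suff -> : z = pmul w r by apply: N'mul.
apply: functional_extensionality_dep => b0.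
rewrite /pmul /r; case: (deq b0 b) => [->|ne]; last by rewrite Hz0 // Hw0 // mul0r.
rewrite Hxz Hxw -rmorphM; apply/phi_eq.
rewrite mulrBr !mulrA.
have H1 := eqmMr (eI b * xz) HI (eqm_sym HI Hy).
rewrite !mulrA ee in H1.
exact: eqm_sym.
Qed.

Lemma min_supp N : prod_minimal RbarI N -> exists b, forall u, N u -> forall b', b' <> b -> u b' = 0.
Proof.
move=> [[NR N0 Nsub Nmul] [w0 [Nw0 [b Hb]]] Hmin].
exists b.
pose N' := fun v : PT => N v /\ forall b', b' <> b -> v b' = 0.
have HN' : prod_right_ideal RbarI N'.
  split.
  - by move=> v [Nv _]; exact: NR.
  - by split.
  - move=> v w [Nv Hv] [Nw Hw]; split; first exact: Nsub.
    by move=> b' ne; rewrite /psub Hv // Hw // subrr.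
  - move=> v r [Nv Hv] Rr; split; first exact: Nmul.
    by move=> b' ne; rewrite /pmul Hv // mul0r.
have nz : prod_nonzero N'.
  exists (pmul w0 (uvec b 1)); split.
    split; first by apply: Nmul => //; exact: uvec_R.
    by move=> b' ne; rewrite /pmul /uvec phi_unit_diff // mulr0.
  by exists b; rewrite /pmul /uvec phi_unit_same rmorph1 mulr1.
move=> u Nu; have := Hmin N' HN' (fun v (h : N' v) => h.1) nz u Nu; by case.
Qed.

Lemma fin_soc (t : list Idx) (z : PT) : (forall b, ~ List.In b t -> z b = 0) -> prod_soc RbarI z.
Proof.
elim: t z => [|b t IH] z Hz.
  by exists [::]; split => // b0; rewrite /psum big_nil; exact: Hz.
pose z' : PT := fun b0 => if deq b0 b then 0 else z b0.
pose u : PT := fun b0 => if deq b0 b then z b0 else 0.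
have Hz' : forall b0, ~ List.In b0 t -> z' b0 = 0.
  move=> b0 nb0; rewrite /z'; case: (deq b0 b) => // ne; apply: Hz => /= [[E|]] //.
  by apply: ne.
have [s [Hs Hsum]] := IH z' Hz'.
exists (u :: s); split.
  move=> v /= [<-|Hv]; last exact: Hs.
  exists (Nb b); split; first exact: Nb_min.
  split.
    exists (eI b * val (z b)) => b0; rewrite /u; case: (deq b0 b) => [E|ne]; first subst b0.
      by rewrite phi_unit_same /phiI qprojE qinK.
    by rewrite phi_unit_diff.
  by move=> b' ne; rewrite /u; case: (deq b' b).
move=> b0; rewrite /psum big_cons; have := Hsum b0; rewrite /psum => H; rewrite -H.
rewrite /u /z'; case: (deq b0 b) => [E|E] /=; by rewrite ?addr0 ?add0r.
Qed.

Lemma soc_fin (z : PT) : prod_soc RbarI z -> fin_supp z.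
Proof.
move=> [s [Hs Hz]].
suff [t Ht] : exists t : list Idx, forall b, ~ List.In b t -> psum s b = 0.
  by exists t => b nb; rewrite Hz; exact: Ht.
elim: s Hs {Hz} => [|u s IH] Hs.
  by exists nil => b _; rewrite /psum big_nil.
have [t Ht] := IH (fun v Hv => Hs v (or_intror Hv)).
have [N [HN Nu]] := Hs u (or_introl erefl).
have [bu Hbu] := min_supp HN.
exists (bu :: t) => b nb; rewrite /psum big_cons.
have -> : u b = 0 by apply: Hbu => // E; apply: nb; left.
rewrite add0r; have := Ht b (fun h => nb (or_intror h)); by rewrite /psum.
Qed.
End Constr.


Theorem lemma3p5 (R : nzRingType) (Hreg : vN_regular R) (Hsa : semiartinian R)
  (Hpf : prim_factors_artinian R) (I : R -> Prop) (HI : socle_term I)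
  (Hle : exists x, ~ I x) :
  (quot_comm I <-> cond_ii I) /\ (cond_ii I <-> cond_iii I).
Proof.
have HI2 := st_ideal HI.
have Hess := fun c (h : ~ I c) => essential Hsa HI h.
have A := i_ii Hreg HI2.
have B := ii_i Hreg HI2 Hsa HI.
have C : quot_comm I -> cond_iii I.
  move=> Hc.
  exists (Idx I), (KI HI2), (@cI R I), (fun b => @psiI R I HI2 b), (phiI HI2).
  move=> Rbar; split.
  - exact: compI Hreg HI2 Hc.
  - exact: endoI Hreg HI2 Hc.
  - by move=> b u v; exact: (@commI R I HI2 Hc b u v).
  - exact: kerI Hreg HI2 Hc Hess.
  - move=> z; split; first exact: (soc_fin Hreg Hc).
    by move=> [t Ht]; exact: (fin_soc Hreg Hc Ht).
have D : cond_iii I -> quot_comm I.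
  move=> [Idx0 [K [c [psi [phi H]]]]]; case: H => _ _ Hcomm Hker _ x y.
  by apply/Hker => b; rewrite rmorphB !rmorphM Hcomm subrr.
split; split; tauto.
Qed.
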